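(* Let $2\le g<h$. Then for every self-adjoint tuple $X\in SM_n(\mathbb C)^g$, $X\in\mathcal D_{F^{[g]}}$ if and only if $(X,0)\in\mathcal D_{F^{[h]}}$ (with $0$ the zero tuple of length $h-g$). Moreover $\mathcal P_g\mathcal D_{F^{[h]}}=\mathcal D_{F^{[g]}}$.
   Context: $F^{[g]}$ is defined recursively: $F^{[2]}=(\sigma_z,\sigma_x)$ with $\sigma_z=\begin{bmatrix}1&0\\0&-1\end{bmatrix}$, $\sigma_x=\begin{bmatrix}0&1\\1&0\end{bmatrix}$, and if $F^{[g]}=(F_1,\dots,F_g)$ then $F^{[g+1]}=(F_1\otimes\sigma_z,\dots,F_g\otimes\sigma_z,I\otimes\sigma_x)$. For a self-adjoint matrix tuple $A$, $\mathcal D_A=\bigcup_n\{X\in SM_n(\mathbb C)^g: I-\sum_i A_i\otimes X_i\succeq0\}$. For a set $K$ of $h$-tuples of self-adjoint matrices and $g<h$, the coordinate projection $\mathcal P_gK$ is the set of $X\in SM_n^g$ (any $n$) for which there is $Y\in SM_n^{h-g}$ with $(X,Y)\in K$. *)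

(* Defs.v *)
From HB Require Import structures.
From mathcomp Require Import all_boot all_order all_algebra.
From mathcomp Require Import mxtens.
Set Implicit Arguments. Unset Strict Implicit. Unset Printing Implicit Defensive.
Import Order.TTheory GRing.Theory Num.Theory.
Local Open Scope ring_scope.
Local Open Scope sesquilinear_scope.

(* Scalars: C is any numClosedFieldType (e.g. the complex numbers);
   for z : C, 0 <= z means z is a nonnegative real. *)

Definition selfadj {C : numClosedFieldType} {n : nat} (M : 'M[C]_n) : Prop :=
  M ^t* = M.

Definition psd {C : numClosedFieldType} {n : nat} (M : 'M[C]_n) : Prop :=
  selfadj M /\ forall v : 'cV[C]_n, 0 <= (v ^t* *m M *m v) ord0 ord0.

Definition sigma_z {C : numClosedFieldType} : 'M[C]_2 :=
  \matrix_(i < 2, j < 2) (if i == j then (if i == 0 :> nat then 1 else -1) else 0).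
Definition sigma_x {C : numClosedFieldType} : 'M[C]_2 :=
  \matrix_(i < 2, j < 2) (if i == j then 0 else 1).

(* Fk k i = the i-th entry (0-based, i <= k) of F^[k+1], a matrix of size 2^k.
   F^[1] := (1) (the 1x1 identity); then the recursion
   F^[k+2] = (F_1 (x) sigma_z, ..., F_(k+1) (x) sigma_z, I (x) sigma_x)
   yields F^[2] = (sigma_z, sigma_x) as in the paper. *)
Fixpoint Fk {C : numClosedFieldType} (k : nat) : nat -> 'M[C]_(2 ^ k) :=
  match k return nat -> 'M[C]_(2 ^ k) with
  | 0 => fun _ => 1%:M
  | k'.+1 => fun i =>
      castmx (esym (expnSr 2 k'), esym (expnSr 2 k'))
        (if (i < k'.+1)%N then Fk k' i *t sigma_z else (1%:M : 'M[C]_(2 ^ k')) *t sigma_x)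
  end.

Definition F {C : numClosedFieldType} (g : nat) : nat -> 'M[C]_(2 ^ g.-1) := Fk g.-1.

(* A g-tuple of n x n matrices is represented by X : nat -> 'M_n,
   only the entries X 0, ..., X (g-1) being relevant. *)
Definition SMtuple {C : numClosedFieldType} {n : nat} (g : nat) (X : nat -> 'M[C]_n) : Prop :=
  forall i, (i < g)%N -> selfadj (X i).

Definition inD {C : numClosedFieldType} {d n : nat} (g : nat)
  (A : nat -> 'M[C]_d) (X : nat -> 'M[C]_n) : Prop :=
  SMtuple g X /\ psd (1%:M - \sum_(i < g) (A i *t X i)).

Definition tcat {C : numClosedFieldType} {n : nat} (g : nat)
  (X Y : nat -> 'M[C]_n) : nat -> 'M[C]_n :=
  fun i => if (i < g)%N then X i else Y (i - g)%N.

Definition projD {C : numClosedFieldType} {n : nat} (g h : nat)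
  (K : (nat -> 'M[C]_n) -> Prop) (X : nat -> 'M[C]_n) : Prop :=
  SMtuple g X /\ exists Y : nat -> 'M[C]_n, SMtuple (h - g) Y /\ K (tcat g X Y).

(* Main.v *)
Require Import Defs.
From mathcomp Require Import all_boot all_order all_algebra.
From mathcomp Require Import mxtens zify ring.
Import Order.TTheory GRing.Theory Num.Theory.
Local Open Scope ring_scope.
Local Open Scope sesquilinear_scope.

Definition sz {C : numClosedFieldType} (s s' : nat) : C :=
  if s == s' then (if s == 0%N then 1 else -1) else 0.
Definition sx {C : numClosedFieldType} (s s' : nat) : C :=
  if s == s' then 0 else 1.

Fixpoint fe {C : numClosedFieldType} (k i a a' : nat) : C :=
  match k with
  | 0 => (a == a')%:R
  | k'.+1 => if (i < k'.+1)%N then fe k' i (a %/ 2)%N (a' %/ 2)%N * sz (a %% 2)%N (a' %% 2)%N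
             else (a %/ 2 == a' %/ 2)%N%:R * sx (a %% 2)%N (a' %% 2)%N
  end.

Lemma FkE {C : numClosedFieldType} k i (a a' : 'I_(2^k)) : (Fk k i : 'M[C]_(2^k)) a a' = fe k i a a'.
Proof.
elim: k i a a' => [|k IH] i a a' /=; first by rewrite mxE.
rewrite castmxE; case: ifP => _; rewrite !mxE ?IH //=.
Qed.

Definition ent {C : numClosedFieldType} {m n} (M : 'M[C]_(m,n)) (i j : nat) : C :=
  match @insub _ (fun x => (x < m)%N) 'I_m i, @insub _ (fun x => (x < n)%N) 'I_n j with
  | Some i', Some j' => M i' j'
  | _, _ => 0 end.

Lemma entE {C : numClosedFieldType} m n (M : 'M[C]_(m,n)) (i : 'I_m) (j : 'I_n) :
  ent M i j = M i j.
Proof. by rewrite /ent !valK. Qed.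

Lemma entO {C : numClosedFieldType} m n (M : 'M[C]_(m,n)) i j (hi : (i < m)%N) (hj : (j < n)%N) :
  ent M i j = M (Ordinal hi) (Ordinal hj).
Proof. by rewrite -entE. Qed.

Lemma ent0 {C : numClosedFieldType} m n i j : ent (0 : 'M[C]_(m,n)) i j = 0.
Proof. by rewrite /ent; case: insub => // ?; case: insub => // ?; rewrite mxE. Qed.
Lemma psd_add {C : numClosedFieldType} N (A B : 'M[C]_N) : psd A -> psd B -> psd (A + B).
Proof.
move=> [hA qA] [hB qB]; split.
  by rewrite /selfadj raddfD /= map_mxD hA hB.
by move=> v; rewrite mulmxDr mulmxDl mxE; apply: addr_ge0.
Qed.

Lemma adjM {C : numClosedFieldType} m n p (A : 'M[C]_(m,n)) (B : 'M[C]_(n,p)) :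
  (A *m B)^t* = B^t* *m A^t*.
Proof. by rewrite trmx_mul map_mxM. Qed.

Lemma psd_reindex {C : numClosedFieldType} N p (M : 'M[C]_N) (f : 'I_p -> 'I_N) (c : 'I_p -> C) :
 psd M -> psd (\matrix_(i, j) ((c i)^* * M (f i) (f j) * c j)).
Proof.
move=> [hM qM].
pose P : 'M[C]_(N,p) := \matrix_(K, i) (if K == f i then c i else 0).
have -> : \matrix_(i,j) ((c i)^* * M (f i) (f j) * c j) = P^t* *m M *m P.
  apply/matrixP=> i j; rewrite !mxE.
  have E1 : forall L, (P^t* *m M) i L = (c i)^* * M (f i) L.
    move=> L; rewrite mxE.
    rewrite (eq_bigr (fun K => if K == f i then (c i)^* * M K L else 0)); last first.
      by move=> K _; rewrite !mxE; case: eqP => _; rewrite ?rmorph0 ?mul0r.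
    by rewrite -big_mkcond big_pred1_eq.
  rewrite (eq_bigr (fun L => if L == f j then (c i)^* * M (f i) L * c j else 0)); last first.
    by move=> L _; rewrite E1 !mxE; case: eqP => _; rewrite ?mulr0.
  by rewrite -big_mkcond big_pred1_eq.
split.
  by rewrite /selfadj !adjM trmxCK hM mulmxA.
by move=> v; rewrite -!mulmxA mulmxA -adjM mulmxA; apply: qM.
Qed.

Lemma psd_reindexN {C : numClosedFieldType} N p (M : 'M[C]_N) (f : nat -> nat) (c : nat -> C) :
  (forall i, (i < p)%N -> (f i < N)%N) -> psd M ->
  psd (\matrix_(i < p, j < p) ((c i)^* * ent M (f i) (f j) * c j)).
Proof.
move=> hf hM.
have := @psd_reindex C N p M (fun i : 'I_p => Ordinal (hf _ (ltn_ord i))) (fun i => c i) hM.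
congr psd; apply/matrixP => i j; rewrite !mxE.
by rewrite (@entO C N N M _ _ (hf _ (ltn_ord i)) (hf _ (ltn_ord j))).
Qed.

Definition penf {C : numClosedFieldType} k n g (s : C) (X : nat -> 'M[C]_n) (I J : nat) : C :=
  (I == J)%:R - s * \sum_(i < g) fe k i (I %/ n)%N (J %/ n)%N * ent (X i) (I %% n)%N (J %% n)%N.

Definition penM {C : numClosedFieldType} k n g (s : C) (X : nat -> 'M[C]_n) : 'M[C]_(2^k * n) :=
  \matrix_(I, J) penf k n g s X I J.

Lemma penE {C : numClosedFieldType} k n g (X : nat -> 'M[C]_n) :
  (1%:M - \sum_(i < g) (Fk k i *t X i)) = penM k n g 1 X.
Proof.
apply/matrixP => I J; rewrite !mxE summxE /penf mul1r; congr (_ - _).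
by apply: eq_bigr => i _; rewrite !mxE FkE -entE.
Qed.
Lemma dummy : True. Proof. by [].
Qed.

Lemma entM {C : numClosedFieldType} k n g (s : C) (X : nat -> 'M[C]_n) I J :
  (I < 2^k * n)%N -> (J < 2^k * n)%N -> ent (penM k n g s X) I J = penf k n g s X I J.
Proof. by move=> hI hJ; rewrite (@entO _ _ _ _ _ _ hI hJ) mxE. Qed.

Lemma eq_divmod n x y : (0 < n)%N -> (x == y) = (x %/ n == y %/ n)%N && (x %% n == y %% n)%N.
Proof.
move=> hn; apply/eqP/andP => [-> //|[/eqP h1 /eqP h2]].
by rewrite (divn_eq x n) (divn_eq y n) h1 h2.
Qed.

Lemma fe_even {C : numClosedFieldType} k i a a' :
  (fe k.+1 i (2 * a) (2 * a') : C) = if (i < k.+1)%N then fe k i a a' else 0.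
Proof.
rewrite /= !mulKn // !modnMr /sz /sx /=; case: ifP => _; by rewrite ?mulr1 ?mulr0.
Qed.

Lemma stepA {C : numClosedFieldType} k n (Z : nat -> 'M[C]_n) :
  inD k.+2 (F k.+2) Z -> inD k.+1 (F k.+1) Z.
Proof.
case=> hS hP; split; first by move=> i hi; apply: hS; lia.
move: hP; rewrite !penE => hP.
have hf : forall I, (I < 2^k * n)%N -> ((2 * (I %/ n)) * n + I %% n < 2^k.+1 * n)%N.
  move=> I hI; have hn : (0 < n)%N by case: n hI {Z hS hP} => //; rewrite muln0.
  have ha : (I %/ n < 2^k)%N by rewrite ltn_divLR.
  have hb : (I %% n < n)%N by rewrite ltn_mod.
  rewrite expnS; move: ha hb; set a := (I %/ n)%N; set b := (I %% n)%N; set t := (2^k)%N.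
  nia.
have := @psd_reindexN C _ _ _ (fun I => (2 * (I %/ n)) * n + I %% n)%N (fun _ => 1) hf hP.
congr psd; apply/matrixP => I J; rewrite !mxE rmorph1 mul1r mulr1.
rewrite entM ?hf //.
have hn : (0 < n)%N.
  have : (val I < 2^k * n)%N := ltn_ord I; move: (val I) => x hx.
  by rewrite lt0n; apply/eqP => hn0; rewrite hn0 muln0 in hx.
rewrite /penf !divnMDl // !modnMDl // !(divn_small (ltn_pmod _ hn)) !addn0 !modn_mod.
rewrite [in RHS](eq_divmod _ _ _ hn) [in LHS](eq_divmod _ _ _ hn) !divnMDl // !modnMDl //.
rewrite !(divn_small (ltn_pmod _ hn)) !addn0 !modn_mod eqn_pmul2l //.
congr (_ - _ * _); under eq_bigr => i _ do rewrite fe_even.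
rewrite big_ord_recr /= ltnn mul0r addr0.
by apply: eq_bigr => i _; rewrite ltn_ord.
Qed.

Fixpoint uf (k a : nat) : nat :=
  match k with 0 => a | 1 => (1 - a)%N | k'.+1 => (2 * uf k' (a %/ 2) + a %% 2)%N end.
Definition sg {C : numClosedFieldType} (s : nat) : C := if s == 0%N then 1 else -1.
Fixpoint uc {C : numClosedFieldType} (k a : nat) : C :=
  match k with 0 => 1 | 1 => sg a | k'.+1 => uc k' (a %/ 2)%N * sg (a %% 2)%N end.

Lemma ufS k a : uf k.+2 a = (2 * uf k.+1 (a %/ 2) + a %% 2)%N. Proof. by []. Qed.
Lemma ucS {C : numClosedFieldType} k a : (uc k.+2 a : C) = uc k.+1 (a %/ 2)%N * sg (a %% 2)%N.
Proof. by []. Qed.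
Lemma feS {C : numClosedFieldType} k i a a' : (fe k.+1 i a a' : C) =
  if (i < k.+1)%N then fe k i (a %/ 2)%N (a' %/ 2)%N * sz (a %% 2)%N (a' %% 2)%N
  else (a %/ 2 == a' %/ 2)%N%:R * sx (a %% 2)%N (a' %% 2)%N.
Proof. by []. Qed.

Lemma half2 x s : (s < 2)%N -> ((2 * x + s) %/ 2 = x)%N /\ ((2 * x + s) %% 2 = s)%N.
Proof. move=> hs; split; lia. Qed.

Lemma uf_lt k a : (a < 2^k.+1)%N -> (uf k.+1 a < 2^k.+1)%N.
Proof.
elim: k a => [|k IH] a ha; first by rewrite /=; lia.
rewrite ufS; have h1 : (a %/ 2 < 2^k.+1)%N by rewrite ltn_divLR // -expnSr.
have := IH _ h1; have := ltn_pmod a (isT : (0 < 2)%N); rewrite (expnS 2 k.+1); lia.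
Qed.

Lemma uf_inv k a : (a < 2^k.+1)%N -> uf k.+1 (uf k.+1 a) = a.
Proof.
elim: k a => [|k IH] a ha; first by rewrite /=; lia.
have h1 : (a %/ 2 < 2^k.+1)%N by rewrite ltn_divLR // -expnSr.
rewrite [X in uf _ X]ufS ufS; have [-> ->] := half2 (uf k.+1 (a %/ 2)) _ (ltn_pmod a (isT : (0 < 2)%N)).
by rewrite IH // mulnC -divn_eq.
Qed.

Lemma uf_eq k a b : (a < 2^k.+1)%N -> (b < 2^k.+1)%N -> (uf k.+1 a == uf k.+1 b) = (a == b).
Proof.
move=> ha hb; apply/eqP/eqP => [h|->//].
by rewrite -(uf_inv _ _ ha) h uf_inv.
Qed.

Lemma sg_sq {C : numClosedFieldType} s : (sg s : C) * sg s = 1.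
Proof. by rewrite /sg; case: ifP; rewrite ?mulr1 ?mulrNN ?mulr1. Qed.

Lemma uc_sq {C : numClosedFieldType} k a : (uc k a : C) * uc k a = 1.
Proof.
elim: k a => [|[|k] IH] a; rewrite ?mulr1 //; first exact: sg_sq.
by rewrite ucS mulrACA IH sg_sq mulr1.
Qed.

Lemma sg_conj {C : numClosedFieldType} s : (sg s : C)^* = sg s.
Proof. by rewrite /sg; case: ifP; rewrite ?rmorph1 ?rmorphN1. Qed.

Lemma uc_conj {C : numClosedFieldType} k a : (uc k a : C)^* = uc k a.
Proof.
elim: k a => [|[|k] IH] a; rewrite ?rmorph1 //; first exact: sg_conj.
by rewrite ucS rmorphM; congr (_ * _); [apply: IH | apply: sg_conj].
Qed.

Lemma sz_sg {C : numClosedFieldType} s s' : (s < 2)%N -> (s' < 2)%N ->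
  (sg s : C) * sz s s' * sg s' = sz s s'.
Proof.
case: s => [|[|s]] // _; case: s' => [|[|s']] // _; rewrite /sg /sz /=.
all: ring.
Qed.

Lemma sx_sg {C : numClosedFieldType} s s' : (s < 2)%N -> (s' < 2)%N ->
  (sg s : C) * sx s s' * sg s' = - sx s s'.
Proof.
case: s => [|[|s]] // _; case: s' => [|[|s']] // _; rewrite /sg /sx /=.
all: ring.
Qed.

Lemma flip {C : numClosedFieldType} k i a a' : (i < k.+2)%N -> (a < 2^k.+1)%N -> (a' < 2^k.+1)%N ->
  (uc k.+1 a : C) * fe k.+1 i (uf k.+1 a) (uf k.+1 a') * uc k.+1 a' = - fe k.+1 i a a'.
Proof.
elim: k i a a' => [|k IH] i a a' hi ha ha'.
{ case: i hi => [|[|i]] // _; case: a ha => [|[|a]] // _; case: a' ha' => [|[|a']] // _;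
  rewrite /= /sg /sz /sx /=.
  all: ring. }
have h1 : (a %/ 2 < 2^k.+1)%N by rewrite ltn_divLR // -expnSr.
have h1' : (a' %/ 2 < 2^k.+1)%N by rewrite ltn_divLR // -expnSr.
have hs := ltn_pmod a (isT : (0 < 2)%N); have hs' := ltn_pmod a' (isT : (0 < 2)%N).
rewrite (feS k.+1 i (uf _ a)) (feS k.+1 i a) !ufS !ucS.
have [-> ->] := half2 (uf k.+1 (a %/ 2)) _ hs.
have [-> ->] := half2 (uf k.+1 (a' %/ 2)) _ hs'.
case: ifP => hi'.
  have e := IH _ _ _ hi' h1 h1'.
  rewrite -[in RHS](sz_sg _ _ hs hs') -mulNr -e; ring.
rewrite uf_eq //; case: eqP => [<-|_]; last by rewrite !mul0r !mulr0 mul0r oppr0.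
have -> : forall x1 y1 S y2 : C, x1 * y1 * (1 * S) * (x1 * y2) = (x1 * x1) * (y1 * S * y2) by move=> *; ring.
by rewrite uc_sq (sx_sg _ _ hs hs') mul1r mul1r.
Qed.

Lemma ord_npos m n (I : 'I_(m * n)) : (0 < n)%N.
Proof.
have : (val I < m * n)%N := ltn_ord I; move: (val I) => x hx.
by rewrite lt0n; apply/eqP => hn0; rewrite hn0 muln0 in hx.
Qed.

Lemma bnd k n I : (I < 2^k.+1 * n)%N -> (I %/ n < 2^k.+1)%N /\ (I %% n < n)%N /\ (0 < n)%N.
Proof.
move=> hI; have hn : (0 < n)%N by case: n hI => //; rewrite muln0.
by rewrite ltn_divLR // ltn_mod.
Qed.

Lemma stepB {C : numClosedFieldType} k n (Z : nat -> 'M[C]_n) :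
  Z k.+2 = 0 -> inD k.+2 (F k.+2) Z -> inD k.+3 (F k.+3) Z.
Proof.
move=> hZ [hS hP]; split.
  move=> i hi; case: (ltnP i k.+2) => hi'; first exact: hS.
  have -> : i = k.+2 by lia.
  by rewrite hZ /selfadj trmx0 map_mx0.
move: hP; rewrite !penE => hP.
have hf : forall I, (I < 2^k.+1 * n)%N ->
   (uf k.+1 (I %/ n) * n + I %% n < 2^k.+1 * n)%N.
  move=> I /bnd [ha [hb hn]]; have := uf_lt _ _ ha.
  move: hb; set t := (2 ^ k.+1)%N; set x := uf _ _; nia.
have := @psd_reindexN C _ _ _ (fun I => uf k.+1 (I %/ n) * n + I %% n)%N
    (fun I => uc k.+1 (I %/ n)%N) hf hP.
have -> : \matrix_(i, j) ((uc k.+1 (i %/ n)%N)^* * ent (penM k.+1 n k.+2 1 Z)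
           (uf k.+1 (i %/ n) * n + i %% n)%N (uf k.+1 (j %/ n) * n + j %% n)%N *
           uc k.+1 (j %/ n)%N) = penM k.+1 n k.+2 (-1) Z.
  apply/matrixP => I J; rewrite !mxE entM ?hf //.
  have [ha [hb hn]] := bnd _ _ _ (ltn_ord I); have [ha' [hb' _]] := bnd _ _ _ (ltn_ord J).
  rewrite /penf !divnMDl // !modnMDl // !(divn_small (ltn_pmod _ hn)) !addn0 !modn_mod.
  rewrite [in RHS](eq_divmod _ _ _ hn) [in LHS](eq_divmod _ _ _ hn) !divnMDl // !modnMDl //.
  rewrite !(divn_small (ltn_pmod _ hn)) !addn0 !modn_mod uf_eq //.
  have hE : forall e : bool, uc k.+1 (I %/ n) * (((I %/ n)%N == (J %/ n)%N) && e)%:R * uc k.+1 (J %/ n) =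
     (((I %/ n)%N == (J %/ n)%N) && e)%:R :> C.
    move=> e; case: eqP => [<-|_]; last by rewrite mulr0 mul0r.
    by case: e; rewrite ?mulr1 ?uc_sq ?mulr0 ?mul0r.
  rewrite uc_conj mul1r mulN1r opprK mulrBr mulrBl hE; congr (_ + _).
  rewrite mulr_sumr mulr_suml -sumrN; apply: eq_bigr => i _.
  rewrite (_ : uc k.+1 (I %/ n) * (fe k.+1 i (uf k.+1 (I %/ n)) (uf k.+1 (J %/ n)) * ent (Z i) (I %% n) (J %% n)) * uc k.+1 (J %/ n) =
     (uc k.+1 (I %/ n) * fe k.+1 i (uf k.+1 (I %/ n)) (uf k.+1 (J %/ n)) * uc k.+1 (J %/ n)) * ent (Z i) (I %% n) (J %% n)); last by ring.
  by rewrite flip // mulNr opprK.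
move=> hM.
have hf0 : forall I, (I < 2^k.+2 * n)%N -> (I %/ n %/ 2 * n + I %% n < 2^k.+1 * n)%N.
  move=> I /bnd [ha [hb hn]]; have : (I %/ n %/ 2 < 2^k.+1)%N by rewrite ltn_divLR // -expnSr.
  move: hb; set t := (2 ^ k.+1)%N; set x := (_ %/ 2)%N; nia.
have A0 := @psd_reindexN C _ _ _ (fun I => I %/ n %/ 2 * n + I %% n)%N
    (fun I => ((I %/ n %% 2) == 0)%N%:R) hf0 hP.
have A1 := @psd_reindexN C _ _ _ (fun I => I %/ n %/ 2 * n + I %% n)%N
    (fun I => ((I %/ n %% 2) == 1)%N%:R) hf0 hM.
have := psd_add _ _ _ A0 A1; congr psd; apply/matrixP => I J; rewrite !mxE !entM ?hf0 //.
have [ha [hb hn]] := bnd _ _ _ (ltn_ord I); have [ha' [hb' _]] := bnd _ _ _ (ltn_ord J).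
rewrite /penf !divnMDl // !modnMDl // !(divn_small (ltn_pmod _ hn)) !addn0 !modn_mod.
rewrite (eq_divmod n I J hn) (eq_divmod 2 (I %/ n)%N (J %/ n)%N isT).
rewrite (eq_divmod n (_ * n + I %% n)%N _ hn) !divnMDl // !modnMDl //.
rewrite !(divn_small (ltn_pmod _ hn)) !addn0 !modn_mod.
rewrite [in RHS](eq_bigr (fun i : 'I_k.+3 => if (i < k.+2)%N then
   sz (I %/ n %% 2)%N (J %/ n %% 2)%N * (fe k.+1 i (I %/ n %/ 2)%N (J %/ n %/ 2)%N * ent (Z i) (I %% n)%N (J %% n)%N) else 0)); last first.
  move=> i _; rewrite (feS k.+1 i (I %/ n)%N); case: (ltnP i k.+2) => hi; first by rewrite mulrAC mulrC.
  have e : val i = k.+2 by apply/eqP; rewrite eqn_leq hi andbT -ltnS ltn_ord.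
  by rewrite (_ : Z i = 0) ?ent0 ?mulr0 // e.
rewrite -big_mkcond /= -(big_ord_widen _ (fun i => sz (I %/ n %% 2)%N (J %/ n %% 2)%N * (fe k.+1 i (I %/ n %/ 2)%N (J %/ n %/ 2)%N * ent (Z i) (I %% n)%N (J %% n)%N)) (leqnSn _)).
rewrite -mulr_sumr.
set T := (\sum_(i < k.+2) _).
rewrite !conjC_nat.
have hs := ltn_pmod (I %/ n) (isT : (0 < 2)%N); have hs' := ltn_pmod (J %/ n) (isT : (0 < 2)%N).
move: (I %/ n %% 2)%N (J %/ n %% 2)%N hs hs' => s s' hs hs'.
case: s hs => [|[|s]] // _; case: s' hs' => [|[|s']] // _; rewrite /sz /= ?andbF ?andbT.
all: rewrite ?andFb /=; ring.
Qed.

Lemma inD_ext {C : numClosedFieldType} d n K (A : nat -> 'M[C]_d) (X Y : nat -> 'M[C]_n) :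
  (forall i, (i < K)%N -> X i = Y i) -> inD K A X -> inD K A Y.
Proof.
move=> e [hS hP]; split; first by move=> i hi; rewrite -e //; apply: hS.
have -> : \sum_(i < K) (A i *t Y i) = \sum_(i < K) (A i *t X i) by apply: eq_bigr => i _; rewrite e.
exact: hP.
Qed.

Lemma down {C : numClosedFieldType} g j n (X : nat -> 'M[C]_n) :
  inD (g.+1 + j) (F (g.+1 + j)) X -> inD g.+1 (F g.+1) X.
Proof.
elim: j => [|j IH]; first by rewrite addn0.
move=> h; apply: IH; rewrite addSn; apply: stepA.
by have <- : (g.+1 + j.+1 = (g + j).+2)%N by lia.
Qed.

Lemma up {C : numClosedFieldType} g j n (X : nat -> 'M[C]_n) :
  (forall i, (g.+2 <= i)%N -> X i = 0) ->
  inD g.+2 (F g.+2) X -> inD (g.+2 + j) (F (g.+2 + j)) X.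
Proof.
move=> hX; elim: j => [|j IH]; first by rewrite addn0.
move=> h; have e : (g.+2 + j.+1 = (g + j).+3)%N by lia.
rewrite e; apply: stepB; first by apply: hX; lia.
have e2 : (g.+2 + j = (g + j).+2)%N by lia.
by rewrite -e2; apply: IH.
Qed.

Theorem mainTheorem5 (C : numClosedFieldType) (g h : nat) :
  (2 <= g)%N -> (g < h)%N ->
  (forall (n : nat) (X : nat -> 'M[C]_n),
      SMtuple g X ->
      (inD g (F g) X <-> inD h (F h) (tcat g X (fun _ => 0)))) /\
  (forall (n : nat) (X : nat -> 'M[C]_n),
      projD g h (inD h (F h)) X <-> inD g (F g) X).
Proof.
move=> hg hgh.
have hP1 : forall (n : nat) (X : nat -> 'M[C]_n),
      SMtuple g X ->
      (inD g (F g) X <-> inD h (F h) (tcat g X (fun _ => 0))).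
  move=> n X hX.
  have e1 : forall i, (i < g)%N -> X i = tcat g X (fun _ => 0) i by move=> i hi; rewrite /tcat hi.
  have e2 : forall i, (i < g)%N -> tcat g X (fun _ => 0) i = X i by move=> i hi; rewrite /tcat hi.
  move: (subnKC (ltnW hgh)); move: (h - g)%N => j hj; subst h.
  case: g hg {hgh hX} e1 e2 => [|[|g']] // _ e1 e2; split => hD.
    apply: up; first by move=> i hi; rewrite /tcat ltnNge hi.
    exact: (@inD_ext C _ _ _ _ _ _ e1 hD).
  by apply: (@inD_ext C _ _ _ _ _ _ e2); apply: (@down C g'.+1 j n).
split => //.
move=> n X; split.
  case=> hS [Y [hY hD]].
  have hD' := hD; move: hD'; move: (subnKC (ltnW hgh)); move: (h - g)%N => j hj; subst h.
  clear hP1; case: g hg {hgh hS hY hD} => [|[|g']] // _ hD'.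
  apply: (@inD_ext C _ _ _ _ (tcat g'.+2 X Y)); first by move=> i hi; rewrite /tcat hi.
  exact: (@down C g'.+1 j n).
move=> hD; split; first by case: hD.
exists (fun _ => 0); split; first by move=> i _; rewrite /selfadj trmx0 map_mx0.
by apply/hP1 => //; case: hD.
Qed.
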